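(* Let $0<\beta<1$. Suppose that for each $x\in\mathcal{X}$ the function $y\mapsto f(x,y)$ is convex on $\mathbb{R}^d$. Then the non-risk region $\mathcal{R}_{\mathcal{X}}(\beta)^c=\mathbb{R}^d\setminus\mathcal{R}_{\mathcal{X}}(\beta)$ is convex.
   Context: Let $Y$ be a random vector in $\mathbb{R}^d$, $\mathcal{X}\subseteq\mathbb{R}^k$ a set of decisions and $f:\mathcal{X}\times\mathbb{R}^d\to\mathbb{R}$ a loss function with $f(x,Y)$ measurable for all $x$. Write $F_x(z)=\mathbb{P}(f(x,Y)\le z)$ and $F_x^{-1}(\beta)=\inf\{z: F_x(z)\ge\beta\}$. The $\beta$-risk region of $x$ is $\mathcal{R}_x(\beta)=\{y\in\mathbb{R}^d: f(x,y)\ge F_x^{-1}(\beta)\}$ and $\mathcal{R}_{\mathcal{X}}(\beta)=\bigcup_{x\in\mathcal{X}}\mathcal{R}_x(\beta)$. *)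

(* Defs.v *)
From HB Require Import structures.
From mathcomp Require Import all_boot all_order all_algebra.
From mathcomp Require Import all_classical all_reals all_analysis.
Set Implicit Arguments. Unset Strict Implicit. Unset Printing Implicit Defensive.
Import Order.TTheory GRing.Theory Num.Theory.
Local Open Scope classical_set_scope.
Local Open Scope ring_scope.

Definition loss_cdf {R : realType} {dT : measure_display} {T : measurableType dT}
  (P : probability T R) {k d : nat} (Y : T -> 'rV[R]_d)
  (f : 'rV[R]_k -> 'rV[R]_d -> R) (x : 'rV[R]_k) (z : R) : \bar R :=
  P [set w | f x (Y w) <= z].

Definition loss_quantile {R : realType} {dT : measure_display} {T : measurableType dT}
  (P : probability T R) {k d : nat} (Y : T -> 'rV[R]_d)
  (f : 'rV[R]_k -> 'rV[R]_d -> R) (x : 'rV[R]_k) (beta : R) : R :=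
  inf [set z : R | (beta%:E <= loss_cdf P Y f x z)%E].

Definition risk_region {R : realType} {dT : measure_display} {T : measurableType dT}
  (P : probability T R) {k d : nat} (Y : T -> 'rV[R]_d)
  (f : 'rV[R]_k -> 'rV[R]_d -> R) (x : 'rV[R]_k) (beta : R) : set 'rV[R]_d :=
  [set y | loss_quantile P Y f x beta <= f x y].

Definition risk_region_set {R : realType} {dT : measure_display} {T : measurableType dT}
  (P : probability T R) {k d : nat} (Y : T -> 'rV[R]_d)
  (f : 'rV[R]_k -> 'rV[R]_d -> R) (X : set 'rV[R]_k) (beta : R) : set 'rV[R]_d :=
  \bigcup_(x in X) risk_region P Y f x beta.

(* Main.v *)
Require Import Defs.
From HB Require Import structures.
From mathcomp Require Import all_boot all_order all_algebra.
From mathcomp Require Import all_classical all_reals all_analysis.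
Import Order.TTheory GRing.Theory Num.Theory.
Local Open Scope classical_set_scope.
Local Open Scope ring_scope.
Local Open Scope convex_scope.

Lemma conv_lt_aux (R : realType) (a b q : R^o) (t : {i01 R}) :
  a < q -> b < q -> a <| t |> b < q.
Proof.
move=> aq bq.
have [ab|ba] := leP a b; first by apply: le_lt_trans (conv_le t ab) bq.
rewrite convC; apply: le_lt_trans (conv_le _ (ltW ba)) aq.
Qed.

Theorem mainTheorem4 (R : realType) (dT : measure_display) (T : measurableType dT)
  (P : probability T R) (k d : nat) (Y : T -> 'rV[R]_d)
  (X : set 'rV[R]_k) (f : 'rV[R]_k -> 'rV[R]_d -> R) (beta : R) :
  (forall x : 'rV[R]_k, measurable_fun setT (fun w => f x (Y w))) ->
  0 < beta -> beta < 1 ->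
  (forall x, X x -> convex_function (E := 'rV[R]_d) setT (f x)) ->
  convex_set (M := 'rV[R]_d) (~` risk_region_set P Y f X beta).
Proof.
move=> _ _ _ cvx u v t; rewrite !inE => hu hv.
move=> [x0 Xx0]; rewrite /risk_region /= => hle.
have hu' : f x0 u < loss_quantile P Y f x0 beta.
  by rewrite ltNge; apply/negP => h; apply: hu; exists x0.
have hv' : f x0 v < loss_quantile P Y f x0 beta.
  by rewrite ltNge; apply/negP => h; apply: hv; exists x0.
have h1 := cvx x0 Xx0 t u v (mem_set I) (mem_set I).
have := le_lt_trans h1 (@conv_lt_aux _ _ _ _ t hu' hv').
by rewrite ltNge hle.
Qed.
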